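(* Assume there exists a cardinal $\vartheta$ with $\mathbf V_\vartheta\models\mathsf{ZFC}$; let $\vartheta$ be the least such and $V=\mathbf V_\vartheta$. Let $I$, $U$, ${}^\ast V$, ${}^\ast\!\in$, ${}^\ast\!=$, $r(\cdot)$ and $\Phi[\mathbf i]$ be as described in the context. Let $\Phi$ be an internal formula (built from $\in$ and $=$) with parameters in ${}^\ast V$, and let $r\ge r(\Phi)$. Then $\Phi$ is true in $\langle{}^\ast V;{}^\ast\!\in,{}^\ast\!=\rangle$ if and only if $\mathbf U i_r\,\mathbf U i_{r-1}\cdots\mathbf U i_1\,\big(\Phi[i_1,\dots,i_r]\text{ is true in }(V,\in)\big)$.
   Context: $I=\{i\in V: i\text{ finite}\}$. $\mathrm{Def}(V)$ is the collection of subsets of $V$ first-order definable in $(V,\in)$ with parameters from $V$. $U$ is an ultrafilter over $I$ such that (A) $\{i\in I:a\in i\}\in U$ for every $a\in V$, and (B) for every $P\subseteq I\times V$ in $\mathrm{Def}(V)$, $\{x\in V:\{i:\langle i,x\rangle\in P\}\in U\}\in\mathrm{Def}(V)$. Write $\mathbf U i\,\varphi(i)$ for $\{i\in I:\varphi(i)\}\in U$. For $r\in\omega$ let ${}^\ast V_r$ be the set of all functions $f:I^r\to V$ (with $I^0=\{\emptyset\}$), and ${}^\ast V=\bigcup_{r\in\omega}{}^\ast V_r$; for $z\in V$ put ${}^\ast z=\{\langle\emptyset,z\rangle\}\in{}^\ast V_0$. For $F\in{}^\ast V$, $r(F)$ is the unique $r$ with $F\in{}^\ast V_r$; for $q\ge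 r(F)$ and $\mathbf i=\langle i_1,\dots,i_q\rangle\in I^q$ put $F[\mathbf i]=F(i_1,\dots,i_{r(F)})$ (so ${}^\ast z[\mathbf i]=z$). For $F,G\in{}^\ast V$ with $r=\max\{r(F),r(G)\}$: $F\,{}^\ast\!\!\in G$ iff $\mathbf U i_r\cdots\mathbf U i_1\,(F[\mathbf i]\in G[\mathbf i])$, and $F\,{}^\ast\!\!=G$ iff $\mathbf U i_r\cdots\mathbf U i_1\,(F[\mathbf i]=G[\mathbf i])$, where $\mathbf i=\langle i_1,\dots,i_r\rangle$. For a formula $\Phi$ with parameters in ${}^\ast V$, $r(\Phi)=\max\{r(F):F\text{ occurs in }\Phi\}$, and for $r\ge r(\Phi)$, $\mathbf i\in I^r$, $\Phi[\mathbf i]$ is obtained by replacing each parameter $F$ by $F[\mathbf i]$ (a formula with parameters in $V$). *)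

(* Defs.v *)
From Stdlib Require Import List Arith Lia.
Import ListNotations.
Set Implicit Arguments.

(* Variables are de Bruijn indices: TVar 0 is the most recently bound one. *)
Inductive term (P : Type) : Type :=
  | TVar (n : nat)
  | TPar (p : P).

Inductive form (P : Type) : Type :=
  | FMem (t u : term P)
  | FEq  (t u : term P)
  | FFalse
  | FNot (f : form P)
  | FAnd (f g : form P)
  | FOr  (f g : form P)
  | FImp (f g : form P)
  | FAll (f : form P)
  | FEx  (f : form P).

Arguments TVar {P} n.
Arguments FFalse {P}.

Definition term_free_below {P} (k : nat) (t : term P) : Prop :=
  match t with TVar n => n < k | TPar _ => True end.

Fixpoint free_below {P} (k : nat) (f : form P) : Prop :=
  match f with
  | FMem t u | FEq t u => term_free_below k t /\ term_free_below k u
  | FFalse => True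
  | FNot f => free_below k f
  | FAnd f g | FOr f g | FImp f g => free_below k f /\ free_below k g
  | FAll f | FEx f => free_below (S k) f
  end.

Definition closed {P} (f : form P) : Prop := free_below 0 f.

Section Sat.
Variables (D P : Type) (memD eqD : D -> D -> Prop) (ip : P -> D).

Definition tval (env : list D) (t : term P) : option D :=
  match t with TVar n => nth_error env n | TPar p => Some (ip p) end.

Definition liftR (R : D -> D -> Prop) (a b : option D) : Prop :=
  match a, b with Some x, Some y => R x y | _, _ => False end.

Fixpoint sat (env : list D) (f : form P) : Prop :=
  match f with
  | FMem t u => liftR memD (tval env t) (tval env u)
  | FEq t u => liftR eqD (tval env t) (tval env u)
  | FFalse => False
  | FNot f => ~ sat env f
  | FAnd f g => sat env f /\ sat env g
  | FOr f g => sat env f \/ sat env g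
  | FImp f g => sat env f -> sat env g
  | FAll f => forall d : D, sat (d :: env) f
  | FEx f => exists d : D, sat (d :: env) f
  end.
End Sat.

Section Star.
Variables (V : Type) (mem : V -> V -> Prop).

Definition satV (env : list V) (f : form V) : Prop :=
  sat mem (@eq V) (fun x => x) env f.

Definition finite_el (x : V) : Prop :=
  exists l : list V, forall y, mem y x <-> In y l.

Definition Iidx : Type := { x : V | finite_el x }.

Definition definable1 (A : V -> Prop) : Prop :=
  exists phi : form V, free_below 1 phi /\ forall x, A x <-> satV [x] phi.

Definition definable2 (Pr : Iidx -> V -> Prop) : Prop :=
  exists phi : form V, free_below 2 phi /\
    forall (i : Iidx) (x : V), Pr i x <-> satV [proj1_sig i; x] phi.

Record ultrafilter (U : (Iidx -> Prop) -> Prop) : Prop := {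
  uf_full  : U (fun _ => True);
  uf_proper : ~ U (fun _ => False);
  uf_up    : forall A B : Iidx -> Prop, U A -> (forall i, A i -> B i) -> U B;
  uf_inter : forall A B : Iidx -> Prop, U A -> U B -> U (fun i => A i /\ B i);
  uf_ult   : forall A : Iidx -> Prop, U A \/ U (fun i => ~ A i)
}.

Definition condA (U : (Iidx -> Prop) -> Prop) : Prop :=
  forall a : V, U (fun i => mem a (proj1_sig i)).

Definition condB (U : (Iidx -> Prop) -> Prop) : Prop :=
  forall Pr : Iidx -> V -> Prop, definable2 Pr ->
    definable1 (fun x => U (fun i => Pr i x)).

(* iterated quantifier:  Uq U r psi  =  U i_r ... U i_1  psi [i_1; ...; i_r] *)
Fixpoint Uq (U : (Iidx -> Prop) -> Prop) (r : nat) (psi : list Iidx -> Prop)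
  : Prop :=
  match r with
  | 0 => psi []
  | S n => U (fun i => Uq U n (fun l => psi (l ++ [i])))
  end.

Definition tup (r : nat) : Type := { l : list Iidx | length l = r }.

(* *V = ⋃_r *V_r, *V_r = functions I^r -> V  (rk F = r(F)) *)
Record starV : Type := mkStar { rk : nat; fn : tup rk -> V }.

Definition star_const (z : V) : starV := @mkStar 0 (fun _ => z).

(* F[i] for i = <i_1,...,i_q>, q >= r(F):  F(i_1,...,i_{r(F)}) *)
Definition evalF (F : starV) (i : list Iidx) (h : rk F <= length i) : V :=
  fn F (exist _ (firstn (rk F) i) (firstn_length_le i h)).

Definition starMem (U : (Iidx -> Prop) -> Prop) (F G : starV) : Prop :=
  Uq U (Nat.max (rk F) (rk G))
     (fun i => forall (h1 : rk F <= length i) (h2 : rk G <= length i),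
                 mem (evalF F i h1) (evalF G i h2)).

Definition starEq (U : (Iidx -> Prop) -> Prop) (F G : starV) : Prop :=
  Uq U (Nat.max (rk F) (rk G))
     (fun i => forall (h1 : rk F <= length i) (h2 : rk G <= length i),
                 evalF F i h1 = evalF G i h2).

Definition satStar (U : (Iidx -> Prop) -> Prop) (env : list starV)
  (f : form starV) : Prop :=
  sat (starMem U) (starEq U) (fun F => F) env f.

Definition rank_t (t : term starV) : nat :=
  match t with TVar _ => 0 | TPar F => rk F end.

Fixpoint rank_f (f : form starV) : nat :=
  match f with
  | FMem t u | FEq t u => Nat.max (rank_t t) (rank_t u)
  | FFalse => 0
  | FNot f => rank_f f
  | FAnd f g | FOr f g | FImp f g => Nat.max (rank_f f) (rank_f g)
  | FAll f | FEx f => rank_f f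
  end.

Definition subst_t (t : term starV) (i : list Iidx)
  : rank_t t <= length i -> term V :=
  match t as t0 return rank_t t0 <= length i -> term V with
  | TVar n => fun _ => TVar n
  | TPar F => fun h => TPar (evalF F i h)
  end.

Fixpoint subst_f (f : form starV) (i : list Iidx) {struct f}
  : rank_f f <= length i -> form V :=
  match f as f0 return rank_f f0 <= length i -> form V with
  | FMem t u => fun h =>
      FMem (subst_t t i (Nat.le_trans _ _ _ (Nat.le_max_l _ _) h))
           (subst_t u i (Nat.le_trans _ _ _ (Nat.le_max_r _ _) h))
  | FEq t u => fun h =>
      FEq (subst_t t i (Nat.le_trans _ _ _ (Nat.le_max_l _ _) h))
          (subst_t u i (Nat.le_trans _ _ _ (Nat.le_max_r _ _) h))
  | FFalse => fun _ => FFalse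
  | FNot g => fun h => FNot (subst_f g i h)
  | FAnd g k => fun h =>
      FAnd (subst_f g i (Nat.le_trans _ _ _ (Nat.le_max_l _ _) h))
           (subst_f k i (Nat.le_trans _ _ _ (Nat.le_max_r _ _) h))
  | FOr g k => fun h =>
      FOr (subst_f g i (Nat.le_trans _ _ _ (Nat.le_max_l _ _) h))
          (subst_f k i (Nat.le_trans _ _ _ (Nat.le_max_r _ _) h))
  | FImp g k => fun h =>
      FImp (subst_f g i (Nat.le_trans _ _ _ (Nat.le_max_l _ _) h))
           (subst_f k i (Nat.le_trans _ _ _ (Nat.le_max_r _ _) h))
  | FAll g => fun h => FAll (subst_f g i h)
  | FEx g => fun h => FEx (subst_f g i h)
  end.

End Star.

(* Main.v *)
Require Import Defs.
From Stdlib Require Import List Arith Lia Classical ClassicalEpsilon ProofIrrelevance.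
Import ListNotations.

Section UqL.
Variables (V : Type) (mem : V -> V -> Prop) (U : (Iidx mem -> Prop) -> Prop).
Hypothesis HU : ultrafilter U.

Lemma U_ext (A B : Iidx mem -> Prop) : (forall i, A i <-> B i) -> (U A <-> U B).
Proof. intro H; split; intro; eapply (uf_up HU); eauto; firstorder. Qed.

Lemma U_const (P : Prop) : U (fun _ => P) <-> P.
Proof.
  split.
  - intro H. destruct (classic P); auto. exfalso. apply (uf_proper HU).
    eapply (uf_up HU); eauto.
  - intro. apply (uf_up HU (fun _ => True)); [apply (uf_full HU)|]. auto.
Qed.

Lemma U_not (A : Iidx mem -> Prop) : U (fun i => ~ A i) <-> ~ U A.
Proof.
  split.
  - intros H1 H2. apply (uf_proper HU). eapply (uf_up HU); [apply (uf_inter HU _ _ H1 H2)|].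
    intros i [a b]; auto.
  - intro H. destruct (uf_ult HU A); tauto.
Qed.

Lemma U_and (A B : Iidx mem -> Prop) : U (fun i => A i /\ B i) <-> U A /\ U B.
Proof.
  split.
  - intro H; split; eapply (uf_up HU); eauto; intros i []; auto.
  - intros [H1 H2]; apply (uf_inter HU); auto.
Qed.

Lemma Uq_mono r : forall (psi chi : list (Iidx mem) -> Prop),
  (forall l, length l = r -> psi l -> chi l) -> Uq U r psi -> Uq U r chi.
Proof.
  induction r; simpl; intros psi chi H Hp.
  - apply H; auto.
  - eapply (uf_up HU); eauto. intros i Hi. eapply IHr; [|exact Hi].
    intros l Hl. apply H. rewrite length_app; simpl; lia.
Qed.

Lemma Uq_ext r (psi chi : list (Iidx mem) -> Prop) :
  (forall l, length l = r -> (psi l <-> chi l)) -> (Uq U r psi <-> Uq U r chi).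
Proof. intro H; split; apply Uq_mono; firstorder. Qed.

Lemma Uq_const r (P : Prop) : Uq U r (fun _ => P) <-> P.
Proof.
  induction r; simpl. tauto.
  rewrite <- (U_const P). apply U_ext. intro; apply IHr.
Qed.

Lemma Uq_not r : forall psi, Uq U r (fun l => ~ psi l) <-> ~ Uq U r psi.
Proof.
  induction r; simpl; intros. tauto.
  rewrite <- U_not. apply U_ext. intro; apply IHr.
Qed.

Lemma Uq_and r : forall psi chi, Uq U r (fun l => psi l /\ chi l) <-> Uq U r psi /\ Uq U r chi.
Proof.
  induction r; simpl; intros. tauto.
  rewrite <- U_and. apply U_ext. intro; apply IHr.
Qed.

Lemma Uq_or r psi chi : Uq U r (fun l => psi l \/ chi l) <-> Uq U r psi \/ Uq U r chi.
Proof.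
  rewrite (Uq_ext r _ (fun l => ~ ((fun l => ~ psi l) l /\ (fun l => ~ chi l) l)))
    by (intros; simpl; tauto).
  rewrite Uq_not, Uq_and, !Uq_not. tauto.
Qed.

Lemma Uq_imp r psi chi : Uq U r (fun l => psi l -> chi l) <-> (Uq U r psi -> Uq U r chi).
Proof.
  rewrite (Uq_ext r _ (fun l => (fun l => ~ psi l) l \/ chi l))
    by (intros; simpl; tauto).
  rewrite Uq_or, Uq_not. tauto.
Qed.

Lemma Uq_firstn r k : forall chi, Uq U (r + k) (fun l => chi (firstn r l)) <-> Uq U r chi.
Proof.
  induction k; intros chi.
  - rewrite Nat.add_0_r. apply Uq_ext. intros l Hl. subst. rewrite firstn_all. tauto.
  - rewrite Nat.add_succ_r. simpl.
    rewrite (U_ext _ (fun _ => Uq U (r + k) (fun l => chi (firstn r l)))).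
    + rewrite U_const. apply IHk.
    + intro i. apply Uq_ext. intros l Hl. rewrite firstn_app.
      replace (r - length l) with 0 by lia. simpl. rewrite app_nil_r. tauto.
Qed.

Lemma Uq_lift r r' psi : r <= r' ->
  (forall l, length l = r' -> (psi l <-> psi (firstn r l))) ->
  (Uq U r' psi <-> Uq U r psi).
Proof.
  intros Hle H. replace r' with (r + (r' - r)) in * by lia.
  rewrite (Uq_ext _ psi (fun l => psi (firstn r l))) by auto.
  apply Uq_firstn.
Qed.
End UqL.
Arguments U_ext {V mem U}.
Arguments U_const {V mem U}.
Arguments U_not {V mem U}.
Arguments U_and {V mem U}.
Arguments Uq_mono {V mem U}.
Arguments Uq_ext {V mem U}.
Arguments Uq_const {V mem U}.
Arguments Uq_not {V mem U}.
Arguments Uq_and {V mem U}.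
Arguments Uq_or {V mem U}.
Arguments Uq_imp {V mem U}.
Arguments Uq_firstn {V mem U}.
Arguments Uq_lift {V mem U}.
Set Implicit Arguments.

Lemma padlen A (x : A) l n : length (firstn n (l ++ repeat x n)) = n.
Proof. apply firstn_length_le. rewrite length_app, repeat_length. lia. Qed.

Section Main.
Variables (V : Type) (mem : V -> V -> Prop) (U : (Iidx mem -> Prop) -> Prop).
Hypothesis HU : ultrafilter U.
Variable i0 : Iidx mem.

Definition ev (F : starV mem) (l : list (Iidx mem)) : V :=
  fn F (exist _ (firstn (rk F) (l ++ repeat i0 (rk F))) (padlen i0 l (rk F))).

Lemma pad_firstn (F : starV mem) l : rk F <= length l ->
  firstn (rk F) (l ++ repeat i0 (rk F)) = firstn (rk F) l.
Proof. intro H. rewrite firstn_app. replace (rk F - length l) with 0 by lia.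
  simpl. apply app_nil_r. Qed.

Lemma evalF_ev F i h : evalF F i h = ev F i.
Proof.
  unfold evalF, ev. generalize (firstn_length_le i h) (padlen i0 i (rk F)).
  rewrite (pad_firstn F i h). intros; f_equal; f_equal; apply proof_irrelevance.
Qed.

Lemma ev_firstn F l r : rk F <= r -> r <= length l -> ev F l = ev F (firstn r l).
Proof.
  intros H1 H2. unfold ev. generalize (padlen i0 l (rk F)) (padlen i0 (firstn r l) (rk F)).
  rewrite (pad_firstn F l) by lia.
  rewrite (pad_firstn F (firstn r l)) by (rewrite length_firstn; lia).
  rewrite firstn_firstn. replace (Init.Nat.min (rk F) r) with (rk F) by lia.
  intros; f_equal; f_equal; apply proof_irrelevance.
Qed.

Lemma tval_subst venv t i h :
  tval (fun x : V => x) venv (subst_t t i h) = tval (fun F => ev F i) venv t.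
Proof. destruct t; simpl; auto. rewrite evalF_ev; auto. Qed.

Lemma sat_subst f : forall venv i h,
  satV mem venv (subst_f f i h) <-> sat mem (@eq V) (fun F => ev F i) venv f.
Proof.
  unfold satV.
  induction f; intros; simpl; rewrite ?tval_subst, ?IHf, ?IHf1, ?IHf2; try tauto.
  - split; intros H d; [exact (proj1 (IHf (d::venv) i h) (H d)) | exact (proj2 (IHf (d::venv) i h) (H d))].
  - split; intros [d H]; exists d; [exact (proj1 (IHf (d::venv) i h) H) | exact (proj2 (IHf (d::venv) i h) H)].
Qed.

Lemma sat_ext_ip (ip1 ip2 : starV mem -> V) f : forall venv,
  (forall F, rk F <= rank_f f -> ip1 F = ip2 F) ->
  (sat mem (@eq V) ip1 venv f <-> sat mem (@eq V) ip2 venv f).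
Proof.
  induction f; intros venv H; simpl in *;
  try (destruct t; destruct u; simpl in *; rewrite ?H by lia; tauto).
  - tauto.
  - rewrite IHf; tauto.
  - rewrite IHf1, IHf2 by (intros; apply H; lia); tauto.
  - rewrite IHf1, IHf2 by (intros; apply H; lia); tauto.
  - rewrite IHf1, IHf2 by (intros; apply H; lia); tauto.
  - split; intros H1 d; [exact (proj1 (IHf (d::venv) H) (H1 d)) | exact (proj2 (IHf (d::venv) H) (H1 d))].
  - split; intros [d H1]; exists d; [exact (proj1 (IHf (d::venv) H) H1) | exact (proj2 (IHf (d::venv) H) H1)].
Qed.

Definition T (f : form (starV mem)) (i : list (Iidx mem)) (venv : list V) :=
  sat mem (@eq V) (fun F => ev F i) venv f.

Lemma T_loc f l r venv : rank_f f <= r -> r <= length l ->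
  (T f l venv <-> T f (firstn r l) venv).
Proof. intros; unfold T; apply sat_ext_ip; intros; apply ev_firstn; lia. Qed.

Lemma map_ev_firstn env l r : Forall (fun F => rk F <= r) env -> r <= length l ->
  map (fun F => ev F l) env = map (fun F => ev F (firstn r l)) env.
Proof. induction 1; simpl; intros; auto. f_equal; auto. apply ev_firstn; auto. Qed.
End Main.
Unset Implicit Arguments.

Section M.
Variables (V : Type) (mem : V -> V -> Prop) (U : (Iidx mem -> Prop) -> Prop).
Hypothesis HU : ultrafilter U.
Variable i0 : Iidx mem.

Notation ev := (ev i0).

Lemma atom (R : V -> V -> Prop) (F G : starV mem) r : rk F <= r -> rk G <= r ->
  (Uq U (Nat.max (rk F) (rk G)) (fun i => forall h1 h2, R (evalF F i h1) (evalF G i h2))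
   <-> Uq U r (fun i => R (ev F i) (ev G i))).
Proof.
  intros H1 H2.
  rewrite (Uq_ext HU _ _ (fun i => R (ev F i) (ev G i))).
  - symmetry. apply Uq_lift; auto. lia.
    intros l Hl. rewrite <- (ev_firstn i0 F l (r:=Nat.max (rk F) (rk G))), <- (ev_firstn i0 G l (r:=Nat.max (rk F) (rk G))) by lia. tauto.
  - intros l Hl. split.
    + intro H. assert (a : rk F <= length l) by lia. assert (b : rk G <= length l) by lia.
      specialize (H a b). rewrite !(evalF_ev i0) in H. auto.
    + intros H a b. rewrite !(evalF_ev i0). auto.
Qed.

Lemma tval_map env t i :
  tval (fun F => ev F i) (map (fun F => ev F i) env) t
  = option_map (fun F => ev F i) (tval (fun F : starV mem => F) env t).
Proof. destruct t; simpl; auto. apply nth_error_map. Qed.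

Lemma tval_rank env t r (F : starV mem) : tval (fun F => F) env t = Some F ->
  Forall (fun F : starV mem => rk F <= r) env -> rank_t t <= r -> rk F <= r.
Proof.
  destruct t; simpl; intros E HF Hr.
  - apply nth_error_In in E. rewrite Forall_forall in HF. auto.
  - inversion E; subst; auto.
Qed.

Lemma ex_case (S : list (starV mem) -> Prop) (Tq : list (Iidx mem) -> list V -> Prop)
  k env r : k <= r -> Forall (fun F : starV mem => rk F <= r) env ->
  (forall env' r', k <= r' -> Forall (fun F : starV mem => rk F <= r') env' ->
     (S env' <-> Uq U r' (fun i => Tq i (map (fun F => ev F i) env')))) ->
  (forall l r venv, k <= r -> r <= length l -> (Tq l venv <-> Tq (firstn r l) venv)) ->
  ((exists d, S (d :: env)) <-> Uq U r (fun i => exists x, Tq i (x :: map (fun F => ev F i) env))).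
Proof.
  intros Hk Henv IH Tloc. split.
  - intros [d Hd]. set (r' := Nat.max r (rk d)).
    assert (Henv' : Forall (fun F : starV mem => rk F <= r') (d :: env)).
    { constructor. unfold r'; lia. eapply Forall_impl; [|exact Henv]. intros a Ha. simpl. unfold r'. cbv beta in *. lia. }
    apply (IH _ r') in Hd; [| unfold r'; lia | auto].
    apply (Uq_lift HU r r'). unfold r'; lia.
    + intros l Hl. rewrite <- (map_ev_firstn i0 (env:=env) l (r:=r)) by (auto; unfold r' in *; lia).
      split; intros [x Hx]; exists x; [apply Tloc|apply <- Tloc]; eauto; unfold r' in *; lia.
    + eapply Uq_mono; [exact HU| |exact Hd]. simpl. intros l _ H. eauto.
  - intro H. set (v0 := proj1_sig i0).
    set (G := @mkStar V mem r (fun t => epsilon (inhabits v0)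
           (fun x => Tq (proj1_sig t) (x :: map (fun F => ev F (proj1_sig t)) env)))).
    exists G. apply (IH _ r); auto.
    eapply Uq_mono; [exact HU| |exact H]. intros l Hl Hx. cbv beta. cbn [map].
    assert (E : ev G l = epsilon (inhabits v0) (fun x => Tq l (x :: map (fun F => ev F l) env))).
    { unfold ev. simpl. assert (E : firstn r (l ++ repeat i0 r) = l).
      { rewrite firstn_app. replace (r - length l) with 0 by lia. rewrite app_nil_r.
        rewrite <- Hl. apply firstn_all. }
      rewrite E. reflexivity. }
    rewrite E. apply epsilon_spec. auto.
Qed.

Theorem mainL f : forall env r, rank_f f <= r -> Forall (fun F : starV mem => rk F <= r) env ->
  (sat (starMem U) (starEq U) (fun F => F) env f <->
   Uq U r (fun i => T i0 f i (map (fun F => ev F i) env))).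
Proof.
  induction f; intros env r Hr Henv.
  -
    rewrite (Uq_ext HU _ _ (fun i => liftR mem (option_map (fun F => ev F i) (tval (fun F : starV mem => F) env t))
                                            (option_map (fun F => ev F i) (tval (fun F : starV mem => F) env u))))
      by (intros; unfold T; simpl; rewrite !tval_map; tauto).
    simpl in Hr. simpl.
    destruct (tval (fun F => F) env t) as [F|] eqn:E1;
    destruct (tval (fun F => F) env u) as [G|] eqn:E2; simpl; try (rewrite (Uq_const HU); tauto).
    apply atom; eapply tval_rank; eauto; lia.
  - rewrite (Uq_ext HU _ _ (fun i => liftR eq (option_map (fun F => ev F i) (tval (fun F : starV mem => F) env t))
                                            (option_map (fun F => ev F i) (tval (fun F : starV mem => F) env u))))
      by (intros; unfold T; simpl; rewrite !tval_map; tauto).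
    simpl in Hr. simpl.
    destruct (tval (fun F => F) env t) as [F|] eqn:E1;
    destruct (tval (fun F => F) env u) as [G|] eqn:E2; simpl; try (rewrite (Uq_const HU); tauto).
    apply atom; eapply tval_rank; eauto; lia.
  - change (False <-> Uq U r (fun _ => False)).
    rewrite (Uq_const HU); tauto.
  - change (~ sat (starMem U) (starEq U) (fun F => F) env f <-> Uq U r (fun i => ~ T i0 f i (map (fun F => ev F i) env))).
    rewrite (Uq_not HU). simpl in Hr. rewrite (IHf env r Hr Henv). tauto.
  - simpl in Hr. change (sat (starMem U) (starEq U) (fun F => F) env f1 /\ sat (starMem U) (starEq U) (fun F => F) env f2 <-> Uq U r (fun i => T i0 f1 i (map (fun F => ev F i) env) /\ T i0 f2 i (map (fun F => ev F i) env))).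
    rewrite (Uq_and HU). rewrite (IHf1 env r), (IHf2 env r) by (auto; lia); tauto.
  - simpl in Hr. change (sat (starMem U) (starEq U) (fun F => F) env f1 \/ sat (starMem U) (starEq U) (fun F => F) env f2 <-> Uq U r (fun i => T i0 f1 i (map (fun F => ev F i) env) \/ T i0 f2 i (map (fun F => ev F i) env))).
    rewrite (Uq_or HU). rewrite (IHf1 env r), (IHf2 env r) by (auto; lia); tauto.
  - simpl in Hr. change ((sat (starMem U) (starEq U) (fun F => F) env f1 -> sat (starMem U) (starEq U) (fun F => F) env f2) <-> Uq U r (fun i => T i0 f1 i (map (fun F => ev F i) env) -> T i0 f2 i (map (fun F => ev F i) env))).
    rewrite (Uq_imp HU). rewrite (IHf1 env r), (IHf2 env r) by (auto; lia); tauto.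
  - simpl in Hr.
    change ((forall d, sat (starMem U) (starEq U) (fun F => F) (d :: env) f) <->
            Uq U r (fun i => forall x, T i0 f i (x :: map (fun F => ev F i) env))).
    rewrite (Uq_ext HU _ _ (fun i => ~ exists x, ~ T i0 f i (x :: map (fun F => ev F i) env))).
    2:{ intros l _. split.
        - intros H0 [x Hx]. apply Hx, H0.
        - intros H0 x. apply NNPP. intro Hx. apply H0. exists x. exact Hx. }
    rewrite (Uq_not HU).
    rewrite <- (ex_case (fun e => ~ sat (starMem U) (starEq U) (fun F => F) e f)
                 (fun i venv => ~ T i0 f i venv) (rank_f f)); auto.
    + split.
      * intros H [d Hd]. apply Hd, H.
      * intros H d. apply NNPP. intro Hd. apply H. exists d. exact Hd.
    + intros env' r' H1 H2. rewrite (Uq_not HU). rewrite (IHf env' r' H1 H2). tauto.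
    + intros. rewrite (T_loc i0 f l (r:=r0) venv) by auto; tauto.
  - simpl in Hr.
    change ((exists d, sat (starMem U) (starEq U) (fun F => F) (d :: env) f) <->
            Uq U r (fun i => exists x, T i0 f i (x :: map (fun F => ev F i) env))).
    apply (ex_case (fun e => sat (starMem U) (starEq U) (fun F => F) e f)
                 (fun i venv => T i0 f i venv) (rank_f f)); auto.
    intros. apply T_loc; auto.
Qed.
End M.

Theorem lemma6 (V : Type) (mem : V -> V -> Prop)
  (U : (Iidx mem -> Prop) -> Prop)
  (HU : ultrafilter U) (HA : condA U) (HB : condB U)
  (Phi : form (starV mem)) (Hcl : closed Phi)
  (r : nat) (Hr : rank_f Phi <= r) :
  satStar U nil Phi <->
  Uq U r (fun i => forall h : rank_f Phi <= length i,
                     satV mem nil (subst_f Phi i h)).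
Proof.
  assert (Hi : exists i0 : Iidx mem, True).
  { apply NNPP; intro Hn. apply (uf_proper HU).
    apply (uf_up HU (fun _ => True)); [apply (uf_full HU)|].
    intros i _. apply Hn; eauto. }
  destruct Hi as [i0 _].
  unfold satStar. rewrite (mainL V mem U HU i0 Phi nil r Hr (Forall_nil _)).
  apply (Uq_ext HU). intros l Hl. simpl map. split.
  - intros H h. apply (sat_subst i0). exact H.
  - intros H. assert (h : rank_f Phi <= length l) by lia.
    apply (sat_subst i0 Phi nil l h). apply H.
Qed.
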